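(* Let $p$ be a prime number and let $1\to\Gamma'\to\Gamma\to\Gamma''$ be an exact sequence of groups. Suppose that $\Gamma''$ has bounded finite subgroups, and that $\Gamma'$ is Jordan (respectively $p$-Jordan, generalized $p$-Jordan, nilpotently Jordan of class at most $c$, nilpotently $p$-Jordan of class at most $c$, generalized nilpotently $p$-Jordan of class at most $c$). Then $\Gamma$ is Jordan (respectively $p$-Jordan, generalized $p$-Jordan, nilpotently Jordan of class at most $c$, nilpotently $p$-Jordan of class at most $c$, generalized nilpotently $p$-Jordan of class at most $c$).
   Context: A group has bounded finite subgroups if there is a constant $B$ such that every finite subgroup has order at most $B$. A group $\Gamma$ is Jordan (resp. nilpotently Jordan of class at most $c$) if there is $J(\Gamma)$ such that every finite subgroup contains a normal subgroup of index at most $J(\Gamma)$ which is abelian (resp. nilpotent of class at most $c$). It is generalized $p$-Jordan (resp. generalized nilpotently $p$-Jordan of class at most $c$) if there is $J(\Gamma)$ such that every finite subgroup of order not divisible by $p$ contains a normal subgroup of index at most $J(\Gamma)$ which is abelian (resp. nilpotent of class at most $c$). It is $p$-Jordan (resp. nilpotently $p$-Jordan of class at most $c$) if there are $J(\Gamma)$, $e(\Gamma)$ such that every finite subgroup $G$ contains a normal subgroup of order coprime to $p$ and index at most $J(\Gamma)|G_p|^{e(\Gamma)}$ which is abelian (resp. nilpotent of class at most $c$), $G_p$ being a $p$-Sylow subgroup of $G$. *)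

(* Defs.v *)
From HB Require Import structures.
From mathcomp Require Import all_boot fingroup nilpotent.
Local Open Scope group_scope.
Set Implicit Arguments. Unset Strict Implicit. Unset Printing Implicit Defensive.

(* A finite subgroup of [G] is represented as a finite group [gT] together
   with an injective group homomorphism [f : gT -> G] (its image is the
   finite subgroup; conversely every finite subgroup arises this way). *)

Definition grp_hom (G H : groupType) (f : G -> H) : Prop :=
  forall x y : G, f (x * y)%g = (f x * f y)%g.

Definition fin_subgroup_emb (gT : finGroupType) (G : groupType) (f : gT -> G)
  : Prop := injective f /\ (forall x y : gT, f (x * y)%g = (f x * f y)%g).

Definition exact3 (G1 G G2 : groupType) (i : G1 -> G) (pi : G -> G2) : Prop :=
  [/\ grp_hom i, grp_hom pi, injective i &
      forall x : G, pi x = 1%g <-> exists y : G1, i y = x].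

Definition bounded_finite_subgroups (G : groupType) : Prop :=
  exists B : nat, forall (gT : finGroupType) (f : gT -> G),
    fin_subgroup_emb f -> (#|[set: gT]| <= B)%N.

Definition nil_at_most (gT : finGroupType) (c : nat) (A : {set gT}) : bool :=
  nilpotent A && (nil_class A <= c)%N.

Definition Jordan (G : groupType) : Prop :=
  exists J : nat, forall (gT : finGroupType) (f : gT -> G),
    fin_subgroup_emb f ->
    exists A : {group gT},
      [/\ A <| [set: gT], abelian A & (#|[set: gT] : A| <= J)%N].

Definition nilJordan (c : nat) (G : groupType) : Prop :=
  exists J : nat, forall (gT : finGroupType) (f : gT -> G),
    fin_subgroup_emb f ->
    exists A : {group gT},
      [/\ A <| [set: gT], nil_at_most c A & (#|[set: gT] : A| <= J)%N].

Definition gen_pJordan (p : nat) (G : groupType) : Prop :=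
  exists J : nat, forall (gT : finGroupType) (f : gT -> G),
    fin_subgroup_emb f -> ~~ (p %| #|[set: gT]|) ->
    exists A : {group gT},
      [/\ A <| [set: gT], abelian A & (#|[set: gT] : A| <= J)%N].

Definition gen_nil_pJordan (p c : nat) (G : groupType) : Prop :=
  exists J : nat, forall (gT : finGroupType) (f : gT -> G),
    fin_subgroup_emb f -> ~~ (p %| #|[set: gT]|) ->
    exists A : {group gT},
      [/\ A <| [set: gT], nil_at_most c A & (#|[set: gT] : A| <= J)%N].

(* |G_p| = order of a p-Sylow subgroup = the p-part #|G|`_p *)
Definition pJordan (p : nat) (G : groupType) : Prop :=
  exists J e : nat, forall (gT : finGroupType) (f : gT -> G),
    fin_subgroup_emb f ->
    exists A : {group gT},
      [/\ A <| [set: gT], coprime #|A| p, abelian A &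
          (#|[set: gT] : A| <= J * (#|[set: gT]|`_p) ^ e)%N].

Definition nil_pJordan (p c : nat) (G : groupType) : Prop :=
  exists J e : nat, forall (gT : finGroupType) (f : gT -> G),
    fin_subgroup_emb f ->
    exists A : {group gT},
      [/\ A <| [set: gT], coprime #|A| p, nil_at_most c A &
          (#|[set: gT] : A| <= J * (#|[set: gT]|`_p) ^ e)%N].

(* Main.v *)
Require Import Defs.
From mathcomp Require Import all_boot fingroup nilpotent.
From mathcomp Require Import ring action morphism quotient.
From Stdlib Require Import ClassicalEpsilon.
Set Implicit Arguments. Unset Strict Implicit. Unset Printing Implicit Defensive.

Lemma arith_aux (a b c i h l k m : nat) :
  i * a = k -> h * b = k -> l * c = k -> h * l = m * i -> m <= k ->
  0 < h -> 0 < l -> 0 < i -> 0 < k -> a <= b * c.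
Proof.
move=> e1 e2 e3 e4 le5 h0 l0 i0 k0.
have : (a * (i * h * l) <= (b * c) * (i * h * l))%N.
  have -> : (a * (i * h * l) = k * (h * l))%N.
    by rewrite -e1; ring.
  have -> : (b * c * (i * h * l) = k * (k * i))%N.
    by rewrite -{1}e2 -e3; ring.
  by rewrite leq_pmul2l // e4 leq_pmul2r.
by rewrite leq_pmul2r // !muln_gt0 i0 h0 l0.
Qed.


Local Open Scope group_scope.

Lemma indexI_le0 (gT : finGroupType) (K H L : {group gT}) :
  H \subset K -> L \subset K -> (#|K : H :&: L| <= #|K : H| * #|K : L|)%N.
Proof.
move=> sHK sLK.
have sIK : H :&: L \subset K by apply: subset_trans (subsetIl _ _) sHK.
apply: (arith_aux (Lagrange sIK) (Lagrange sHK) (Lagrange sLK) (mul_cardG H L)).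
- by apply: subset_leq_card; rewrite mul_subG.
- exact: cardG_gt0.
- exact: cardG_gt0.
- by rewrite cardG_gt0.
- exact: cardG_gt0.
Qed.

Lemma indexI_le (gT : finGroupType) (K H L : {group gT}) :
  H \subset K -> (#|K : H :&: L| <= #|K : H| * #|K : L|)%N.
Proof.
move=> sHK; rewrite -(indexgI K L) -(indexgI K (H :&: L)).
have -> : K :&: (H :&: L) = H :&: (K :&: L).
  by rewrite setICA.
exact: indexI_le0 (subsetIl _ _).
Qed.

Lemma bigcap_index (gT : finGroupType) (K A : {group gT}) :
  K <| [set: gT] -> A \subset K -> forall X : {set gT},
  (#|K : \bigcap_(x in X) A :^ x| <= #|K : A| ^ #|[set A :^ x | x in X]|)%N.
Proof.
move=> nK sAK X.
elim: {X}_.+1 {-2}X (ltnSn #|X|) => // n IH X lt.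
case: (set_0Vmem X) => [-> | [x0 X0]].
  rewrite big_set0 imset0 cards0 expn0 -indexgI setIT indexgg //.
rewrite (big_setD1 x0 X0) /=.
rewrite -{2}(setD1K X0) imsetU1 cardsU1.
have IH' := IH (X :\ x0).
have ltX : (#|X :\ x0| < n)%N.
  by move: lt; rewrite (cardsD1 x0 X) X0 add1n ltnS.
move: {IH IH'}(IH' ltX) => IH.
have sK : A :^ x0 \subset K.
  have nKx : K :^ x0 = K by apply/normP; rewrite (subsetP (normal_norm nK)) ?inE.
  by rewrite -nKx conjSg.
case: (boolP (A :^ x0 \in [set A :^ x | x in X :\ x0])) => [/imsetP [x1 x1X e] | nin].
  have -> : A :^ x0 :&: \bigcap_(x in X :\ x0) A :^ x = \bigcap_(x in X :\ x0) A :^ x.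
    by apply/setIidPr; rewrite e; apply: bigcap_inf.
  by rewrite add0n.
rewrite add1n expnS.
apply: leq_trans (indexI_le _ sK) _.
by rewrite leq_mul // -(indexJg K A x0) (normP _) // (subsetP (normal_norm nK)) ?inE.
Qed.

Lemma core_index (gT : finGroupType) (K A : {group gT}) :
  K <| [set: gT] -> A <| K ->
  [/\ gcore A [set: gT] <| [set: gT], gcore A [set: gT] \subset A &
  (#|[set: gT] : gcore A [set: gT]| <=
     #|[set: gT] : K| * #|K : A| ^ #|[set: gT] : K|)%N].
Proof.
move=> nK nA; have sAK := normal_sub nA.
split; first exact: gcore_normal (subsetT _).
  exact: gcore_sub.
have sCK : gcore A [set: gT] \subset K := subset_trans (gcore_sub _ _) sAK.
rewrite -(Lagrange_index (subsetT K) sCK) leq_mul2l; apply/orP; right.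
apply: leq_trans (bigcap_index nK sAK [set: gT]) _.
apply: leq_pexp2l; first exact: indexg_gt0.
rewrite -/(conjugates A [set: gT]) card_conjugates.
apply: dvdn_leq; first exact: indexg_gt0.
apply: indexgS; rewrite subsetI subsetT /=; exact: normal_norm nA.
Qed.

Lemma nil_at_mostS (gT : finGroupType) c (A B : {group gT}) :
  B \subset A -> nil_at_most c A -> nil_at_most c B.
Proof.
move=> sBA /andP [nA cA]; have nB := nilpotentS sBA nA.
apply/andP; split => //; apply/lcn_nil_classP => //.
apply/trivgP; rewrite -(lcn_nil_classP c nA cA); exact: lcnS.
Qed.

Lemma transfer (gT : finGroupType) (K : {group gT}) (A' : {group subg_of K}) :
  K <| [set: gT] -> A' <| [set: subg_of K] ->
  exists C : {group gT},
  [/\ C <| [set: gT], (#|C| %| #|A'|)%N, 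
      (abelian A' -> abelian C), (forall c, nil_at_most c A' -> nil_at_most c C) &
      (#|[set: gT] : C| <= #|[set: gT] : K| * #|[set: subg_of K] : A'| ^ #|[set: gT] : K|)%N].
Proof.
move=> nK nA'.
set A := (sgval @* A')%G.
have sA'D : A' \subset 'dom (@sgval _ K) by rewrite subsetT.
have imK : sgval @* [set: subg_of K] = K by exact: im_sgval.
have nAK : A <| K by rewrite -imK; exact: morphim_normal.
have [nC sCA le] := core_index nK nAK.
exists (gcore A [set: gT])%G; split => //.
- by rewrite -(card_injm (injm_sgval K) sA'D); exact: cardSg.
- by move=> ab; apply: abelianS sCA _; exact: morphim_abelian.
- move=> c /andP [nl cl]; apply: nil_at_mostS sCA _; apply/andP; split.
    exact: morphim_nil.
  rewrite nil_class_injm //; exact: injm_sgval.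
- suff <- : #|K : A| = #|[set: subg_of K] : A'| by [].
  by rewrite -imK index_injm ?subsetT //; exact: injm_sgval.
Qed.
Definition asb (P : Prop) : bool := if excluded_middle_informative P then true else false.
Lemma asbP (P : Prop) : asb P <-> P.
Proof. by rewrite /asb; case: excluded_middle_informative. Qed.

Lemma hom1 (G H : groupType) (h : G -> H) : grp_hom h -> h 1 = 1.
Proof.
move=> hh; have e := hh 1 1; rewrite mulg1 in e.
by rewrite -[LHS](mulKg (h 1)) -e mulVg.
Qed.

Lemma homV (G H : groupType) (h : G -> H) : grp_hom h -> forall x, h x^-1 = (h x)^-1.
Proof.
move=> hh x; apply: (@mulIg _ (h x)); rewrite -hh mulVg mulVg; exact: hom1.
Qed.

Section Key.
Variables (G1 G G2 : groupType) (i : G1 -> G) (pi : G -> G2).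
Hypothesis ex : exact3 i pi.
Variables (gT : finGroupType) (f : gT -> G).
Hypothesis femb : fin_subgroup_emb f.

Let phi x := pi (f x).
Lemma phi_hom : grp_hom phi.
Proof. case: ex => _ hpi _ _; case: femb => _ hf x y; by rewrite /phi hf hpi. Qed.

Definition Kset := [set x : gT | asb (phi x = 1)].
Lemma memK x : x \in Kset <-> phi x = 1.
Proof. by rewrite inE asbP. Qed.

Lemma Kgrp : group_set Kset.
Proof.
apply/group_setP; split; first by apply/memK; exact: hom1 phi_hom.
move=> x y /memK hx /memK hy; apply/memK; by rewrite phi_hom hx hy mulg1.
Qed.
Canonical Kg := Group Kgrp.

Lemma Knormal : Kg <| [set: gT].
Proof.
rewrite /normal subsetT /=; apply/normsP => z _.
apply/eqP; rewrite eqEcard cardJg leqnn andbT; apply/subsetP => y.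
case/imsetP => x /memK hx ->; apply/memK.
rewrite /conjg !phi_hom hx (homV phi_hom).
by rewrite mul1g mulVg.
Qed.

Lemma phi_eq x y : (phi x = phi y) <-> (x * y^-1 \in Kg).
Proof.
split => [e | /memK].
  by apply/memK; rewrite phi_hom (homV phi_hom) e mulgV.
rewrite phi_hom (homV phi_hom) => e.
by rewrite -[phi x]mulg1 -(mulVg (phi y)) mulgA e mul1g.
Qed.

Lemma nN x : x \in 'N(Kg).
Proof. exact: (subsetP (normal_norm Knormal)) x (in_setT x). Qed.

Lemma cos_eq x y : (x * y^-1 \in Kg) <-> (coset Kg x = coset Kg y).
Proof.
have e : coset Kg (x * y^-1) = coset Kg x * (coset Kg y)^-1.
  by rewrite morphM ?nN ?groupV ?nN // morphV ?nN.
split => [xK | ec].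
  by apply/eqP; rewrite eq_mulgV1 -e; apply/eqP/coset_id.
by apply: coset_idr (nN _) _; rewrite e ec mulgV.
Qed.

Lemma Kindex (B : nat) :
  (forall (hT : finGroupType) (h : hT -> G2), fin_subgroup_emb h -> (#|[set: hT]| <= B)%N) ->
  (#|[set: gT] : Kg| <= B)%N.
Proof.
move=> hB.
pose h (X : coset_of Kg) := phi (repr X).
have hemb : fin_subgroup_emb h.
  split.
    move=> X Y /phi_eq /cos_eq; by rewrite !coset_reprK.
  move=> X Y; rewrite /h -phi_hom; apply/phi_eq/cos_eq.
  by rewrite morphM ?nN // /= !coset_reprK; exact: (@coset_reprK _ Kg (X * Y)).
rewrite -card_quotient; last exact: normal_norm Knormal.
apply: leq_trans _ (hB _ h hemb); apply: subset_leq_card; exact: subsetT.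
Qed.

Lemma exK (u : subg_of Kg) : exists y : G1, i y = f (sgval u).
Proof. case: ex => _ _ _ e; apply/e; apply/memK; exact: subgP. Qed.

Definition gK (u : subg_of Kg) : G1 := proj1_sig (constructive_indefinite_description _ (exK u)).
Lemma gKP u : i (gK u) = f (sgval u).
Proof. exact: (proj2_sig (constructive_indefinite_description _ (exK u))). Qed.

Lemma gK_emb : fin_subgroup_emb gK.
Proof.
case: ex => hi _ ii _; case: femb => fi hf.
split.
  move=> u v e; apply: subg_inj; apply: fi; by rewrite -!gKP e.
move=> u v; apply: ii; by rewrite hi !gKP hf.
Qed.

End Key.

Lemma key (G1 G G2 : groupType) (i : G1 -> G) (pi : G -> G2) (B : nat) :
  exact3 i pi ->
  (forall (hT : finGroupType) (h : hT -> G2), fin_subgroup_emb h -> (#|[set: hT]| <= B)%N) ->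
  forall (gT : finGroupType) (f : gT -> G), fin_subgroup_emb f ->
  exists K : {group gT}, [/\ K <| [set: gT], (#|[set: gT] : K| <= B)%N &
    exists g : subg_of K -> G1, fin_subgroup_emb g].
Proof.
move=> ex hB gT f femb.
exists (Kg ex femb); split.
- exact: Knormal.
- exact: Kindex.
- exists (@gK _ _ _ i pi ex gT f femb); exact: gK_emb.
Qed.

Lemma expn_mono (a b n : nat) : (a <= b)%N -> (a ^ n <= b ^ n)%N.
Proof. move=> ab; elim: n => // n IH; rewrite !expnS; exact: leq_mul. Qed.

Lemma bound_aux (k a B J : nat) : (0 < a)%N -> (k <= B)%N -> (a <= J)%N ->
  (k * a ^ k <= B * J ^ B)%N.
Proof.
move=> a0 kB aJ; apply: (leq_mul kB).
exact: leq_trans (leq_pexp2l a0 kB) (expn_mono _ aJ).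
Qed.

Lemma card_subgT (gT : finGroupType) (K : {group gT}) : #|[set: subg_of K]| = #|K|.
Proof.
by rewrite -(card_injm (injm_sgval K)) ?subsetT // im_sgval.
Qed.

Lemma pbound (gT : finGroupType) (K : {group gT}) (p J e : nat) :
  (J * #|[set: subg_of K]|`_p ^ e <= J * #|[set: gT]|`_p ^ e)%N.
Proof.
rewrite leq_mul2l; apply/orP; right; apply: expn_mono.
apply: dvdn_leq; first exact: part_gt0.
rewrite card_subgT; apply: partn_dvd; first by rewrite cardG_gt0.
exact: cardSg (subsetT _).
Qed.

Lemma pdiv_sub (gT : finGroupType) (K : {group gT}) (p : nat) :
  ~~ (p %| #|[set: gT]|)%N -> ~~ (p %| #|[set: subg_of K]|)%N.
Proof.
move=> np; apply: contra np => d; apply: dvdn_trans d _.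
rewrite card_subgT; exact: cardSg (subsetT _).
Qed.

Lemma pexp_eq (B J P e : nat) : (B * (J * P ^ e) ^ B = B * J ^ B * P ^ (e * B))%N.
Proof. by rewrite expnMn -expnM mulnA. Qed.

Theorem lemma2p8 (p c : nat) (G1 G G2 : groupType)
    (i : G1 -> G) (pi : G -> G2) :
  prime p -> exact3 i pi -> bounded_finite_subgroups G2 ->
  (Jordan G1 -> Jordan G) /\
  (pJordan p G1 -> pJordan p G) /\
  (gen_pJordan p G1 -> gen_pJordan p G) /\
  (nilJordan c G1 -> nilJordan c G) /\
  (nil_pJordan p c G1 -> nil_pJordan p c G) /\
  (gen_nil_pJordan p c G1 -> gen_nil_pJordan p c G).
Proof.
move=> hp ex [B hB].
have K := key ex hB.
split; [|split; [|split; [|split; [|split]]]].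
- case=> J hJ; exists (B * J ^ B)%N => gT f femb.
  have [K0 [nK iK [g gemb]]] := K gT f femb.
  have [A' [nA' abA' idx]] := hJ _ g gemb.
  have [C [nC dC abC nilC idxC]] := transfer nK nA'.
  exists C; split => //; first exact: abC.
  apply: leq_trans idxC _; exact: bound_aux (indexg_gt0 _ _) iK idx.
- case=> J [e hJ]; exists (B * J ^ B)%N, (e * B)%N => gT f femb.
  have [K0 [nK iK [g gemb]]] := K gT f femb.
  have [A' [nA' cop abA' idx]] := hJ _ g gemb.
  have [C [nC dC abC nilC idxC]] := transfer nK nA'.
  exists C; split => //; first exact: coprime_dvdl dC cop.
    exact: abC.
  apply: leq_trans idxC _; rewrite -pexp_eq.
  exact: bound_aux (indexg_gt0 _ _) iK (leq_trans idx (pbound _ _ _ _)).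
- case=> J hJ; exists (B * J ^ B)%N => gT f femb np.
  have [K0 [nK iK [g gemb]]] := K gT f femb.
  have [A' [nA' abA' idx]] := hJ _ g gemb (pdiv_sub _ np).
  have [C [nC dC abC nilC idxC]] := transfer nK nA'.
  exists C; split => //; first exact: abC.
  apply: leq_trans idxC _; exact: bound_aux (indexg_gt0 _ _) iK idx.
- case=> J hJ; exists (B * J ^ B)%N => gT f femb.
  have [K0 [nK iK [g gemb]]] := K gT f femb.
  have [A' [nA' abA' idx]] := hJ _ g gemb.
  have [C [nC dC abC nilC idxC]] := transfer nK nA'.
  exists C; split => //; first exact: nilC.
  apply: leq_trans idxC _; exact: bound_aux (indexg_gt0 _ _) iK idx.
- case=> J [e hJ]; exists (B * J ^ B)%N, (e * B)%N => gT f femb.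
  have [K0 [nK iK [g gemb]]] := K gT f femb.
  have [A' [nA' cop abA' idx]] := hJ _ g gemb.
  have [C [nC dC abC nilC idxC]] := transfer nK nA'.
  exists C; split => //; first exact: coprime_dvdl dC cop.
    exact: nilC.
  apply: leq_trans idxC _; rewrite -pexp_eq.
  exact: bound_aux (indexg_gt0 _ _) iK (leq_trans idx (pbound _ _ _ _)).
- case=> J hJ; exists (B * J ^ B)%N => gT f femb np.
  have [K0 [nK iK [g gemb]]] := K gT f femb.
  have [A' [nA' abA' idx]] := hJ _ g gemb (pdiv_sub _ np).
  have [C [nC dC abC nilC idxC]] := transfer nK nA'.
  exists C; split => //; first exact: nilC.
  apply: leq_trans idxC _; exact: bound_aux (indexg_gt0 _ _) iK idx.
Qed.
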